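(* Let $f,g:\mathbb{R}^n\to[0,+\infty)$ and $h_1,h_2:\mathbb{R}^n\to\mathbb{R}$, let $C\subseteq\mathbb{R}^n$ be closed and convex, $\Omega:=\{x:g(x)\neq0\}$, $C\cap\Omega\neq\emptyset$, and assume: $f$ is convex; $g$ is differentiable with locally Lipschitz gradient; $h_1$ is differentiable with locally Lipschitz gradient; $h_2$ is convex. Define $F:\mathbb{R}^n\to(-\infty,+\infty]$ by $F(x)=f^2(x)/g(x)+h_1(x)-h_2(x)$ if $x\in\Omega\cap C$ and $F(x)=+\infty$ otherwise. Suppose $S:=\{x\in\mathbb{R}^n:f(x)=g(x)=0\}\neq\emptyset$. If $x^0\in\mathrm{dom}F$ satisfies $$F(x^0)<\inf\Big\{\liminf_{z\to x}F(z):x\in S\Big\},$$ then the level set $\mathcal{X}_0:=\{x\in\mathrm{dom}F:F(x)\le F(x^0)\}$ is closed.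
   Context: $\mathrm{dom}F=\{x:F(x)<+\infty\}=\Omega\cap C$. *)

(* Defs.v *)
From HB Require Import structures.
From mathcomp Require Import all_boot all_order all_algebra.
From mathcomp Require Import all_classical all_reals all_analysis.
Set Implicit Arguments. Unset Strict Implicit. Unset Printing Implicit Defensive.
Import Order.TTheory GRing.Theory Num.Theory.
Import numFieldNormedType.Exports.
Local Open Scope classical_set_scope.
Local Open Scope ring_scope.

(* R^n is represented by row vectors 'rV[R]_n. *)

Definition convex_fun (R : realType) (n : nat) (f : 'rV[R]_n -> R) : Prop :=
  forall (x y : 'rV[R]_n) (t : R), 0 <= t -> t <= 1 ->
    f (t *: x + (1 - t) *: y) <= t * f x + (1 - t) * f y.

Definition dotv (R : realType) (n : nat) (u v : 'rV[R]_n) : R :=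
  \sum_(i < n) u ord0 i * v ord0 i.

Definition diff_loclip_grad (R : realType) (n : nat) (g : 'rV[R]_n -> R) : Prop :=
  exists G : 'rV[R]_n -> 'rV[R]_n,
    (forall x, differentiable g x /\ forall v, 'd g x v = dotv (G x) v) /\
    (forall x, exists2 r : R, 0 < r & exists L : R,
       forall y z, ball x r y -> ball x r z -> `|G y - G z| <= L * `|y - z|).

Definition Ffun (R : realType) (n : nat) (f g h1 h2 : 'rV[R]_n -> R)
  (C : set 'rV[R]_n) (x : 'rV[R]_n) : \bar R :=
  if `[< g x != 0 /\ C x >] then ((f x ^+ 2 / g x + h1 x - h2 x)%:E)%E
  else (+oo)%E.

Definition liminf_at (R : realType) (n : nat) (F : 'rV[R]_n -> \bar R)
  (x : 'rV[R]_n) : \bar R :=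
  ereal_sup [set ereal_inf (F @` ball x r) | r in [set r : R | 0 < r]].

(* Main.v *)
Require Import Defs.
From HB Require Import structures.
From mathcomp Require Import all_boot all_order all_algebra.
From mathcomp Require Import all_classical all_reals all_analysis.
From mathcomp Require Import ring lra.
Import Order.TTheory GRing.Theory Num.Theory.
Import numFieldNormedType.Exports.
Local Open Scope classical_set_scope.
Local Open Scope ring_scope.

Lemma cube_bound (R : realType) (n : nat) (f : 'rV[R]_n -> R) (a : 'rV[R]_n) (r : R) :
  convex_fun f -> 0 < r -> exists M, forall y : 'rV[R]_n,
    (forall j, `|y ord0 j - a ord0 j| <= r) -> f y <= M.
Proof.
move=> cf r0.
pose vtx (s : {ffun 'I_n -> bool}) : 'rV[R]_n :=
  \row_j (if s j then a ord0 j + r else a ord0 j - r).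
exists (\sum_(s : {ffun 'I_n -> bool}) `|f (vtx s)|).
suff H : forall k, forall y : 'rV[R]_n, (forall j, `|y ord0 j - a ord0 j| <= r) ->
   (forall j : 'I_n, (k <= j)%N -> y ord0 j = a ord0 j + r \/ y ord0 j = a ord0 j - r) ->
   f y <= \sum_(s : {ffun 'I_n -> bool}) `|f (vtx s)|.
  by move=> y hy; apply: (H n) => // j; rewrite leqNgt ltn_ord.
elim=> [|k IH] y hy hv.
  pose s := [ffun j => y ord0 j == a ord0 j + r].
  have -> : y = vtx s.
    apply/rowP => j; rewrite !mxE ffunE ord1.
    case: (hv j (leq0n _)) => ->; first by rewrite eqxx.
    by case: eqP.
  rewrite (bigD1 s) //= (le_trans (ler_norm _)) // lerDl sumr_ge0 //.
case: (ltnP k n) => hk; last first.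
  apply: IH => // j kj; apply: hv; move: (ltn_ord j) => jn.
  by rewrite ltn_neqAle kj andbT; apply/eqP => ejk; move: jn; rewrite -ejk ltnNge hk.
pose kk : 'I_n := Ordinal hk.
pose ym := \row_j (if j == kk then a ord0 j - r else y ord0 j).
pose yp := \row_j (if j == kk then a ord0 j + r else y ord0 j).
pose t := (a ord0 kk + r - y ord0 kk) / (2 * r).
have hyk := hy kk.
have t0 : 0 <= t.
  rewrite /t divr_ge0 //; last by rewrite mulr_ge0 // ltW.
  move: hyk; rewrite ler_norml; lra.
have t1 : t <= 1.
  rewrite /t ler_pdivrMr; last by rewrite mulr_gt0.
  move: hyk; rewrite ler_norml; lra.
have -> : y = t *: ym + (1 - t) *: yp.
  apply/rowP => j; rewrite !mxE ord1.
  case: eqP => [->|_]; last by rewrite -mulrDl addrCA subrr addr0 mul1r.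
  rewrite /t; field; by rewrite gt_eqF.
apply: (le_trans (cf _ _ _ t0 t1)).
have bm : forall (u : 'rV[R]_n), (forall j, `|u ord0 j - a ord0 j| <= r) -> 
  (forall j : 'I_n, (k.+1 <= j)%N -> u ord0 j = y ord0 j) -> 
   (u ord0 kk = a ord0 kk + r \/ u ord0 kk = a ord0 kk - r) ->
   f u <= \sum_(s : {ffun 'I_n -> bool}) `|f (vtx s)|.
  move=> u hu hu1 hu2; apply: IH => // j kj.
  case: (ltngtP k j) => [kj'|jk|ekj]; first by rewrite hu1 //; apply: hv.
    by move: kj; rewrite leqNgt jk.
  by have -> : j = kk by apply: val_inj.
have fm : f ym <= \sum_(s : {ffun 'I_n -> bool}) `|f (vtx s)|.
  apply: bm.
  - move=> j; rewrite !mxE; case: eqP => _ //; rewrite addrAC subrr add0r normrN ger0_norm // ltW //.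
  - move=> j kj; rewrite !mxE; case: eqP => // ejk; move: kj; rewrite ejk /= ltnn //.
  - by right; rewrite !mxE eqxx.
have fp : f yp <= \sum_(s : {ffun 'I_n -> bool}) `|f (vtx s)|.
  apply: bm.
  - move=> j; rewrite !mxE; case: eqP => _ //; rewrite addrAC subrr add0r ger0_norm // ltW //.
  - move=> j kj; rewrite !mxE; case: eqP => // ejk; move: kj; rewrite ejk /= ltnn //.
  - by left; rewrite !mxE eqxx.
set M := \sum_(s : {ffun 'I_n -> bool}) _ in fm fp *.
have : t * f ym <= t * M by rewrite ler_wpM2l.
have : (1 - t) * f yp <= (1 - t) * M by rewrite ler_wpM2l // subr_ge0.
lra.
Qed.

Lemma convex_cont (R : realType) (n : nat) (f : 'rV[R]_n -> R) :
  convex_fun f -> continuous f.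
Proof.
move=> cf; suff : forall a : 'rV[R]_n, f @ a --> f a by [].
move=> a.
have [M hM] := @cube_bound R n f a 1 cf ltr01.
have faM : f a <= M by apply: hM => j; rewrite subrr normr0.
apply/cvgrPdist_lt; first exact: (@nbhs_filter _ (a : 'rV[R]_n)).
move=> e e0.
suff hN : nbhs (a : 'rV[R]_n) [set t | `|f a - f t| < e] by exact: hN.
pose d := Num.min 1 (e / (M - f a + 1)).
have D1 : 0 < M - f a + 1 by rewrite ltr_wpDl // subr_ge0.
have d0 : 0 < d by rewrite lt_min ltr01 divr_gt0.
have d1 : d <= 1 by rewrite ge_min lexx.
have dD : d * (M - f a) < e.
  apply: (@le_lt_trans _ _ (e / (M - f a + 1) * (M - f a))).
    by rewrite ler_wpM2r ?subr_ge0 // ge_min lexx orbT.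
  rewrite mulrAC ltr_pdivrMr // ltr_pM2l //; lra.
apply/nbhs_ballP; exists d; first exact: d0.
move=> y ay.
have hay : forall j, `|y ord0 j - a ord0 j| < d.
  move=> j; case: ay => _ /(_ ord0 j); rewrite -ball_normE /= distrC //.
pose z := a + d^-1 *: (y - a).
pose w := a - d^-1 *: (y - a).
have bz : forall j, `|z ord0 j - a ord0 j| <= 1.
  move=> j; rewrite !mxE addrAC subrr add0r normrM ger0_norm ?invr_ge0 ?ltW //.
  by rewrite mulrC ltr_pdivrMr // mul1r hay.
have bw : forall j, `|w ord0 j - a ord0 j| <= 1.
  move=> j; rewrite !mxE addrAC subrr add0r normrN normrM ger0_norm ?invr_ge0 ?ltW //.
  by rewrite mulrC ltr_pdivrMr // mul1r hay.
have fzM := hM _ bz.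
have fwM := hM _ bw.
have h1 : f y <= d * M + (1 - d) * f a.
  have -> : y = d *: z + (1 - d) *: a.
    apply/rowP => j; rewrite !mxE; field; by rewrite gt_eqF.
  apply: (le_trans (cf _ _ _ (ltW d0) d1)).
  rewrite lerD2r; apply: ler_wpM2l => //; exact: ltW.
have d10 : 0 < 1 + d by rewrite addr_gt0.
have h2 : (1 + d) * f a <= f y + d * M.
  have ea : a = (1 + d)^-1 *: y + (1 - (1 + d)^-1) *: w.
    apply/rowP => j; rewrite !mxE; field; rewrite ?gt_eqF //.
  have t0 : 0 <= (1 + d)^-1 by rewrite invr_ge0 ltW.
  have t1 : (1 + d)^-1 <= 1 by rewrite invf_le1 // lerDl ltW.
  have := cf y w _ t0 t1; rewrite -ea => h.
  have := ler_wpM2l (ltW d10) h.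
  have -> : (1 + d) * ((1 + d)^-1 * f y + (1 - (1 + d)^-1) * f w) = f y + d * f w.
    by field; rewrite gt_eqF.
  move=> hh; apply: (le_trans hh); rewrite lerD2l; apply: ler_wpM2l => //; exact: ltW.
have : `|f a - f y| <= d * (M - f a).
  move: h1 h2; rewrite mulrBl mulrDl !mul1r => h1 h2.
  rewrite ler_norml; apply/andP; split; rewrite mulrBr; lra.
move=> h; exact: le_lt_trans h dD.
Qed.

Theorem proposition4p1 (R : realType) (n : nat)
  (f g h1 h2 : 'rV[R]_n -> R) (C : set 'rV[R]_n) (x0 : 'rV[R]_n) :
  (forall x, 0 <= f x) -> (forall x, 0 <= g x) ->
  closed C -> convex_set C ->
  (C `&` [set x | g x != 0] !=set0) ->
  convex_fun f -> diff_loclip_grad g -> diff_loclip_grad h1 -> convex_fun h2 ->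
  ([set x | f x = 0 /\ g x = 0] !=set0) ->
  (C `&` [set x | g x != 0]) x0 ->
  (Ffun f g h1 h2 C x0 <
     ereal_inf [set liminf_at (Ffun f g h1 h2 C) x | x in [set x | f x = 0%R /\ g x = 0%R]])%E ->
  closed [set x | (C `&` [set x | g x != 0]) x /\
                  (Ffun f g h1 h2 C x <= Ffun f g h1 h2 C x0)%E].
Proof.
move=> f0 g0 clC _ _ cvf [G [dg _]] [H [dh _]] cvh2 _ hx0 hlt.
have fc := @convex_cont R n f cvf.
have h2c := @convex_cont R n h2 cvh2.
have gc : forall x : 'rV[R]_n, g @ x --> g x.
  by move=> x; apply: differentiable_continuous; case: (dg x).
have h1c : forall x : 'rV[R]_n, h1 @ x --> h1 x.
  by move=> x; apply: differentiable_continuous; case: (dh x).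
pose phi z := f z * f z / g z + h1 z - h2 z.
have FE : forall z, C z -> g z != 0 -> Ffun f g h1 h2 C z = (phi z)%:E.
  by move=> z Cz gz; rewrite /Ffun asboolT // /phi expr2.
pose c := phi x0.
have Fx0 : Ffun f g h1 h2 C x0 = c%:E by case: hx0 => ? ?; rewrite FE.
set X0 := [set x | _ /\ _].
have X0E : forall z, X0 z -> [/\ C z, g z != 0 & phi z <= c].
  move=> z [[Cz gz]]; rewrite FE // Fx0 lee_fin => h; by split.
move=> x clx.
have near_contra : forall P, nbhs x P -> (forall z, X0 z -> P z -> False) -> False.
  move=> P hP hc; have [z [Xz Pz]] := clx P hP; exact: hc z Xz Pz.
have Cx : C x.
  apply: clC; apply: (closureS _ clx) => z [[]] //.
have [gx0|gxn] := eqVneq (g x) 0; last first.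
  split; first by split.
  rewrite FE // Fx0 lee_fin; rewrite leNgt; apply/negP => cphi.
  have phic : phi @ x --> phi x.
    exact: (cvgB (cvgD (cvgM (cvgM (fc x) (fc x)) (cvgV gxn (gc x))) (h1c x)) (h2c x)).
  have hn : \forall t \near x, c < phi t := cvgr_gt _ phic _ cphi.
  have hn2 := hn (@nbhs_filter _ (x : 'rV[R]_n)).
  apply: (near_contra [set t | c < phi t] hn2) => z /X0E [_ _ pz] /=.
  by rewrite ltNge pz.
exfalso.
have [fx0|fxn] := eqVneq (f x) 0.
  have Sx : [set x | f x = 0%R /\ g x = 0%R] x by [].
  have : (liminf_at (Ffun f g h1 h2 C) x <= c%:E)%E.
    apply: ge_ereal_sup => _ [r /= r0 <-].
    apply: ge_ereal_inf.
    have [z [Xz bz]] := clx _ (nbhsx_ballx x r r0).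
    exists (Ffun f g h1 h2 C z); first by exists z.
    by case: Xz => _; rewrite Fx0.
  have : (ereal_inf [set liminf_at (Ffun f g h1 h2 C) x | x in [set x | f x = 0%R /\ g x = 0%R]] <= liminf_at (Ffun f g h1 h2 C) x)%E.
    by apply: ereal_inf_lbound; exists x.
  move=> h1' h2'; have := lt_le_trans hlt (le_trans h1' h2').
  by rewrite Fx0 ltxx.
have fxp : 0 < f x by rewrite lt0r fxn f0.
pose m := h1 x - h2 x - 1.
pose q := (f x / 2) * (f x / 2).
have q0 : 0 < q by rewrite mulr_gt0 // divr_gt0.
pose K := `|c - m| + 1.
have K0 : 0 < K by rewrite ltr_wpDl.
pose eps := q / K.
have eps0 : 0 < eps by rewrite divr_gt0.
have fx2 : f x / 2 < f x by lra.
have hA : \forall t \near x, f x / 2 < f t := cvgr_gt _ (fc x) _ fx2.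
have gxe : g x < eps by rewrite gx0.
have hB : \forall t \near x, g t < eps := cvgr_lt _ (gc x) _ gxe.
have mx : m < h1 x - h2 x by rewrite /m; lra.
have hC : \forall t \near x, m < h1 t - h2 t := cvgr_gt _ (cvgB (h1c x) (h2c x)) _ mx.
have FF := @nbhs_filter _ (x : 'rV[R]_n).
have hAll := filterI (hA FF) (filterI (hB FF) (hC FF FF)).
have hAll2 : nbhs (x : 'rV[R]_n) [set t | f x / 2 < f t /\ g t < eps /\ m < h1 t - h2 t] by exact: hAll.
have [z [/X0E [Cz gz pz] [fa [gb hc]]]] := clx _ hAll2.
have gzp : 0 < g z by rewrite lt0r gz g0.
have qf : q <= f z * f z.
  by apply: ler_pM; rewrite ?divr_ge0 ?ltW.
have q1 : q / g z <= f z * f z / g z by rewrite ler_wpM2r // invr_ge0 ltW.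
have q2 : K < q / g z.
  rewrite ltr_pdivlMr //; apply: (@lt_le_trans _ _ (K * eps)).
    by rewrite ltr_pM2l.
  by rewrite /eps mulrC divfK ?gt_eqF.
have : c - m <= `|c - m| by apply: ler_norm.
move: pz; rewrite /phi /K in q2 *; lra.
Qed.
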